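(* For every integer $k\ge1$, $$(\widetilde{\mathbb P}_k)^3=\widetilde{\mathbb S}^*_k\oplus\widetilde{\mathbb I}^*_k\oplus\widetilde{\mathbb H}_k,$$ i.e. every $\mathbf V\in(\widetilde{\mathbb P}_k)^3$ can be written uniquely as $\mathbf V=\mathbf F+\mathbf G+\mathbf H$ with $(\mathbf F,\mathbf G,\mathbf H)\in\widetilde{\mathbb S}^*_k\times\widetilde{\mathbb I}^*_k\times\widetilde{\mathbb H}_k$. Moreover $(\widetilde{\mathbb P}_0)^3=\widetilde{\mathbb H}_0$.
   Context: $\widetilde{\mathbb P}_l$ denotes the space of real homogeneous polynomials of degree $l$ in three variables. For $k\ge1$, $\widetilde{\mathbb S}_k=\{\mathbf\Phi\in(\widetilde{\mathbb P}_k)^3:\nabla\cdot\mathbf\Phi=0\}$, $\widetilde{\mathbb I}_k=\{\mathbf\Phi\in(\widetilde{\mathbb P}_k)^3:\nabla\times\mathbf\Phi=0\}$, $\widetilde{\mathbb H}_k=\widetilde{\mathbb S}_k\cap\widetilde{\mathbb I}_k$, and $\widetilde{\mathbb H}_0=(\widetilde{\mathbb P}_0)^3$. $\widetilde{\mathbb S}^*_k$ and $\widetilde{\mathbb I}^*_k$ denote (arbitrary but fixed) complements of $\widetilde{\mathbb H}_k$ in $\widetilde{\mathbb S}_k$ and in $\widetilde{\mathbb I}_k$ respectively, i.e. $\widetilde{\mathbb S}_k=\widetilde{\mathbb S}^*_k\oplus\widetilde{\mathbb H}_k$ and $\widetilde{\mathbb I}_k=\widetilde{\mathbb I}^*_k\oplus\widetilde{\mathbb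 H}_k$. *)

(* Defs.v *)
From HB Require Import structures.
From mathcomp Require Import all_boot all_order all_algebra.
From mathcomp Require Import mpoly.
Set Implicit Arguments. Unset Strict Implicit. Unset Printing Implicit Defensive.
Import GRing.Theory.
Local Open Scope ring_scope.

Definition VF (R : realFieldType) := {ffun 'I_3 -> {mpoly R[3]}}.

Definition Pt (R : realFieldType) (k : nat) (V : VF R) : Prop :=
  forall i : 'I_3, V i \is k.-homog.

Definition divF (R : realFieldType) (V : VF R) : {mpoly R[3]} :=
  \sum_(i < 3) mderiv i (V i).

Definition curlF (R : realFieldType) (V : VF R) : VF R :=
  [ffun i : 'I_3 => let j := ordS i in let l := ordS j in
     mderiv j (V l) - mderiv l (V j)].

Definition St (R : realFieldType) (k : nat) (V : VF R) : Prop :=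
  Pt k V /\ divF V = 0.
Definition It (R : realFieldType) (k : nat) (V : VF R) : Prop :=
  Pt k V /\ curlF V = 0.
Definition Ht (R : realFieldType) (k : nat) (V : VF R) : Prop :=
  St k V /\ It k V.

Definition is_subspace (R : realFieldType) (A : VF R -> Prop) : Prop :=
  A 0 /\ forall (a : R) (u v : VF R), A u -> A v -> A (a *: u + v).

(* C is a complement of the subspace H inside the space S: S = C (+) H *)
Definition is_complement (R : realFieldType) (C H S : VF R -> Prop) : Prop :=
  [/\ is_subspace C,
      (forall v, C v -> S v),
      (forall v, C v -> H v -> v = 0) &
      (forall v, S v -> exists c h, [/\ C c, H h & v = c + h])].

(* Main.v *)
Require Import Defs.
From HB Require Import structures.
From mathcomp Require Import all_boot all_order all_algebra.
From mathcomp Require Import mpoly.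
From mathcomp Require Import zify lra ring.
Import GRing.Theory Num.Theory.
Local Open Scope ring_scope.

Section S.
Variable R : realFieldType.
Implicit Types p q : {mpoly R[3]}.

Definition i0 : 'I_3 := @Ordinal 3 0 isT.
Definition i1 : 'I_3 := @Ordinal 3 1 isT.
Definition i2 : 'I_3 := @Ordinal 3 2 isT.

Lemma sum3 (T : zmodType) (F : 'I_3 -> T) : \sum_(i < 3) F i = F i0 + F i1 + F i2.
Proof.
rewrite !big_ord_recl big_ord0 addr0 addrA.
by congr (F _ + F _ + F _); apply/val_inj.
Qed.

Lemma mdeg3 (m : 'X_{1..3}) : mdeg m = (m i0 + m i1 + m i2)%N.
Proof.
rewrite mdegE !big_ord_recl big_ord0 addn0 addnA.
by congr (m _ + m _ + m _)%N; apply/val_inj.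
Qed.

Lemma mcoeff_deriv_homog d p i m : p \is d.-homog ->
  (mderiv i p)@_m != 0 -> (mdeg m).+1 = d.
Proof.
move=> /dhomogP hp; rewrite mcoeff_mderiv => nz.
have : p@_(m + U_(i)) != 0.
  by apply: contraNneq nz => ->; rewrite mul0rn.
rewrite -mcoeff_msupp => /hp; change (mdeg (m + U_(i)) = d -> (mdeg m).+1 = d) => <-; rewrite mdegD mdeg1 addn1.
by [].
Qed.

Lemma deriv_homog d p i : p \is d.-homog -> mderiv i p \is d.-1.-homog.
Proof.
move=> hp; apply/dhomogP => m; rewrite mcoeff_msupp => /(mcoeff_deriv_homog _ _ _ _ hp).
by move=> <-.
Qed.

Lemma deriv_homog0 p i : p \is 0.-homog -> mderiv i p = 0.
Proof.
move=> hp; apply/mpolyP => m; rewrite mcoeff0.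
by apply/eqP; apply: contraTT isT => /(mcoeff_deriv_homog _ _ _ _ hp).
Qed.


Definition lap p : {mpoly R[3]} := \sum_(i < 3) mderiv i (mderiv i p).

Lemma lap_lin c p q : lap (c *: p + q) = c *: lap p + lap q.
Proof.
rewrite /lap scaler_sumr -big_split /=; apply: eq_bigr => i _.
by rewrite !mderivD !mderivZ.
Qed.

Lemma lap0 : lap 0 = 0.
Proof. by rewrite /lap big1 // => i _; rewrite !mderiv0. Qed.

Lemma lapZ c p : lap (c *: p) = c *: lap p.
Proof. by rewrite /lap scaler_sumr; apply: eq_bigr => i _; rewrite !mderivZ. Qed.

Lemma lapB p q : lap (p - q) = lap p - lap q.
Proof. by rewrite /lap -sumrB; apply: eq_bigr => i _; rewrite !mderivB. Qed.

Lemma lapX a : lap 'X_[a] =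
  \sum_(i < 3) (((a i)%:R * ((a - U_(i))%MM i)%:R) *: 'X_[a - U_(i) - U_(i)]).
Proof.
by apply: eq_bigr => i _; rewrite !mderivX mderivZ mderivX scalerA.
Qed.


Definition Plap (m : 'X_{1..3}) :=
  exists phi, phi \is (mdeg m).+2.-homog /\ lap phi = 'X_[m].

Lemma aux_j (m : 'X_{1..3}) (j : 'I_3) :
  (j == i1) || (j == i2) ->
  (forall m' : 'X_{1..3}, (m' i1 + m' i2 < m i1 + m i2)%N -> Plap m') ->
  let a := (m + U_(i0) + U_(i0))%MM in
  exists psi, psi \is (mdeg m).+2.-homog /\
    lap psi = (((a j)%:R * ((a - U_(j))%MM j)%:R) *: 'X_[a - U_(j) - U_(j)]).
Proof.
move=> hj IH a.
have [hm|hm] := leqP 2 (m j).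
  have [|psi [hpsi lpsi]] := IH (a - U_(j) - U_(j))%MM.
    case/orP: hj hm => /eqP -> hm; rewrite /a !mnmBE !mnmDE !mnm1E /=; lia.
  exists ((a j)%:R * ((a - U_(j))%MM j)%:R *: psi); split.
    apply: dhomogZ; move: hpsi.
    have -> : mdeg (a - U_(j) - U_(j))%MM = mdeg m; last by [].
    by rewrite !mdeg3; case/orP: hj hm => /eqP -> hm;
      rewrite /a !mnmBE !mnmDE !mnm1E /=; lia.
  by rewrite lapZ lpsi.
exists 0; split; first exact: dhomog0.
rewrite lap0 -natrM.
have -> : (a j * (a - U_(j))%MM j = 0)%N.
  by case/orP: hj hm => /eqP -> hm; rewrite /a !mnmBE !mnmDE !mnm1E /=; nia.
by rewrite scale0r.
Qed.


Lemma step (m : 'X_{1..3}) :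
  (forall m' : 'X_{1..3}, (m' i1 + m' i2 < m i1 + m i2)%N -> Plap m') -> Plap m.
Proof.
move=> IH.
have [psi1 [h1 l1]] := @aux_j m i1 (isT : (i1 == i1) || (i1 == i2)) IH.
have [psi2 [h2 l2]] := @aux_j m i2 (isT : (i2 == i1) || (i2 == i2)) IH.
move: l1 l2; set a := (m + U_(i0) + U_(i0))%MM => l1 l2.
have ha : (a - U_(i0) - U_(i0))%MM = m.
  by apply/mnmP => k; rewrite /a !mnmBE !mnmDE !mnm1E; lia.
set c0 : R := ((a i0)%:R * ((a - U_(i0))%MM i0)%:R).
have c0nz : c0 != 0.
  rewrite /c0 -natrM pnatr_eq0 /a !mnmBE !mnmDE !mnm1E /=; lia.
exists (c0^-1 *: ('X_[a] - psi1 - psi2)); split.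
  apply: dhomogZ; rewrite rpredB // rpredB // dhomogX.
  apply/eqP; change (mdeg a = (mdeg m).+2); by rewrite /a !mdegD !mdeg1 !addn1.
rewrite lapZ !lapB lapX sum3 -/c0 l1 l2 ha.
by rewrite [X in X - _ - _]addrAC !addrK scalerA mulVf // scale1r.
Qed.

Lemma lap_mono (m : 'X_{1..3}) : Plap m.
Proof.
move: {2}(m i1 + m i2)%N (leqnn (m i1 + m i2)%N) => N.
elim: N m => [|N IHN] m hm; apply: step => mm hmm; [exfalso; lia | apply: IHN; lia].
Qed.


Lemma lap_homog d q : q \is d.-homog ->
  exists phi, phi \is d.+2.-homog /\ lap phi = q.
Proof.
move=> /dhomogP hq.
have hs : forall m, m \in msupp q -> mdeg m = d by move=> m /hq.
rewrite {1}(mpolyE q).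
elim: (msupp q) hs => [|m s IH] hs.
  by exists 0; rewrite big_nil lap0; split; first exact: dhomog0.
have [|phis [hphis lphis]] := IH.
  by move=> m' hm'; apply: hs; rewrite inE hm' orbT.
have [phim [hphim lphim]] := lap_mono m.
rewrite (hs m) ?mem_head // in hphim.
exists (q@_m *: phim + phis); split.
  by rewrite rpredD // rpredZ.
by rewrite lap_lin lphim lphis big_cons.
Qed.

End S.

Section Main.
Variable R : realFieldType.

Lemma divF_lin (a : R) (u v : VF R) : divF (a *: u + v) = a *: divF u + divF v.
Proof.
rewrite /divF scaler_sumr -big_split /=; apply: eq_bigr => i _.
by rewrite !ffunE mderivD mderivZ.
Qed.

Lemma curlF_lin (a : R) (u v : VF R) : curlF (a *: u + v) = a *: curlF u + curlF v.
Proof.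
apply/ffunP => i; rewrite !ffunE /= !ffunE !mderivD !mderivZ scalerBr.
by rewrite addrACA opprD.
Qed.

Lemma Pt_lin k (a : R) (u v : VF R) : Pt k u -> Pt k v -> Pt k (a *: u + v).
Proof. by move=> hu hv i; rewrite !ffunE rpredD // rpredZ. Qed.

Lemma St_lin k (a : R) (u v : VF R) : St k u -> St k v -> St k (a *: u + v).
Proof.
move=> [pu du] [pv dv]; split; first exact: Pt_lin.
by rewrite divF_lin du dv scaler0 addr0.
Qed.

Lemma It_lin k (a : R) (u v : VF R) : It k u -> It k v -> It k (a *: u + v).
Proof.
move=> [pu du] [pv dv]; split; first exact: Pt_lin.
by rewrite curlF_lin du dv scaler0 addr0.
Qed.

Lemma Ht_lin k (a : R) (u v : VF R) : Ht k u -> Ht k v -> Ht k (a *: u + v).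
Proof. by move=> [su iu] [sv iv]; split; [apply: St_lin | apply: It_lin]. Qed.

Lemma sub_lin (A : VF R -> Prop) (u v : VF R) :
  (forall (a : R) u v, A u -> A v -> A (a *: u + v)) -> A u -> A v -> A (u - v).
Proof. by move=> h hu hv; rewrite addrC -scaleN1r; apply: h. Qed.

Lemma add_lin (A : VF R -> Prop) (u v : VF R) :
  (forall (a : R) u v, A u -> A v -> A (a *: u + v)) -> A u -> A v -> A (u + v).
Proof. by move=> h hu hv; rewrite -[u]scale1r; apply: h. Qed.

Lemma decomp_SI k (V : VF R) : (1 <= k)%N -> Pt k V ->
  exists s i, [/\ St k s, It k i & V = s + i].
Proof.
move=> k1 hV.
have hd : divF V \is k.-1.-homog.
  by apply: rpred_sum => i _; apply: deriv_homog.
have [phi [hphi lphi]] := lap_homog _ _ _ hd.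
pose g : VF R := [ffun i => mderiv i phi].
have hg : It k g.
  split.
    move=> i; rewrite ffunE; have := deriv_homog _ _ _ i hphi.
    by have -> : (k.-1.+2.-1 = k)%N by lia.
  apply/ffunP => i; rewrite !ffunE /= !ffunE mderiv_comm subrr.
  by [].
exists (V - g), g; split => //; last by rewrite subrK.
split; first by apply: (@sub_lin (Pt k)) => //; [move=> ????; apply: Pt_lin | case: hg].
have -> : V - g = (-1) *: g + V by rewrite addrC scaleN1r.
rewrite divF_lin -lphi scaleN1r addrC.
apply/eqP; rewrite subr_eq0; apply/eqP; apply: eq_bigr => i _.
by rewrite ffunE.
Qed.

End Main.

Lemma Ht0 (R : realFieldType) k : Ht k (0 : VF R).
Proof.
have P0 : Pt k (0 : VF R) by move=> j; rewrite ffunE; exact: dhomog0.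
split; split => //.
  by rewrite /divF big1 // => j _; rewrite ffunE mderiv0.
by apply/ffunP => j; rewrite !ffunE /= !ffunE !mderiv0 subrr.
Qed.

Lemma subACA (T : zmodType) (a b c d : T) : (a - b) + (c - d) = (a + c) - (b + d).
Proof. by rewrite opprD addrACA. Qed.

Theorem mainTheorem9 (R : realFieldType) :
  (forall (k : nat), (1 <= k)%N ->
   forall (Sst Ist : VF R -> Prop),
     is_complement Sst (Ht k) (St k) ->
     is_complement Ist (Ht k) (It k) ->
     forall V : VF R, Pt k V ->
       exists F G H : VF R,
         [/\ Sst F, Ist G, Ht k H, V = F + G + H &
           forall F' G' H' : VF R, Sst F' -> Ist G' -> Ht k H' ->
             V = F' + G' + H' -> [/\ F' = F, G' = G & H' = H]])
  /\ (forall V : VF R, Pt 0 V <-> Ht 0 V).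
Proof.
split.
  move=> k k1 Sst Ist [[_ sS] inS dS decS] [[_ sI] inI dI decI] V hV.
  have [s [i [hs hi ->]]] := decomp_SI _ _ _ k1 hV.
  have [c1 [h1 [hc1 hh1 ->]]] := decS s hs.
  have [c2 [h2 [hc2 hh2 ->]]] := decI i hi.
  have HL : forall (a : R) u v, Ht k u -> Ht k v -> Ht k (a *: u + v).
    by move=> *; apply: Ht_lin.
  have SL : forall (a : R) u v, St k u -> St k v -> St k (a *: u + v).
    by move=> *; apply: St_lin.
  have hH0 : Ht k (h1 + h2) by apply: (@add_lin R (Ht k)).
  exists c1, c2, (h1 + h2); split => //; first by rewrite addrACA.
  rewrite addrACA; move: (h1 + h2) hH0 => H0 hH0.
  move=> F G H hF hG hH E.
  have hdF : Sst (c1 - F) by apply: (@sub_lin R Sst).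
  have hdG : Ist (c2 - G) by apply: (@sub_lin R Ist).
  have hdH : Ht k (H0 - H) by apply: (@sub_lin R (Ht k)).
  have Z : (c1 - F) + (c2 - G) + (H0 - H) = 0.
    by rewrite !subACA -E subrr.
  have eG : c2 - G = - ((c1 - F) + (H0 - H)).
    by apply/eqP; rewrite -addr_eq0 addrCA addrA Z.
  have G0 : c2 - G = 0.
    apply: dI => //; split; last exact: inI.
    rewrite eG -scaleN1r -[_ *: _]addr0; apply: (SL); last by case: (Ht0 R k).
    by apply: (@add_lin R (St k)); [exact: SL | exact: inS | case: hdH].
  rewrite G0 addr0 in Z.
  have eF : c1 - F = - (H0 - H) by apply/eqP; rewrite -addr_eq0 Z.
  have F0 : c1 - F = 0.
    apply: dS => //; rewrite eF -scaleN1r -[_ *: _]addr0; apply: (HL) => //; exact: Ht0.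
  rewrite F0 add0r in Z.
  by split; apply/esym/eqP; rewrite -subr_eq0 ?F0 ?G0 ?Z.
move=> V; split; last by case=> [[]].
move=> hV; have d0 : forall i j, mderiv j (V i) = 0 by move=> i j; apply: deriv_homog0.
split; split => //.
  by rewrite /divF big1 // => i _; rewrite d0.
by apply/ffunP => i; rewrite !ffunE /= !d0 subrr.
Qed.
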